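(* Let $\mathcal A$ be a class of spaces and let $X$ be an absolute extensor for all $Z\in\mathcal A$. If $X$ has a binary normal closed subbase $\mathcal S$, then every $\mathcal S$-convex $\mathcal S$-open continuous surjection $f\colon X\to Y$ is $\mathcal A$-soft.
   Context: All spaces are Tychonoff and maps continuous. $X$ is an absolute extensor for $Z$ if every continuous map from a closed subset of $Z$ to $X$ extends to a continuous map $Z\to X$. A map $f\colon X\to Y$ is $\mathcal A$-soft if for any $Z\in\mathcal A$, closed $A\subset Z$ and continuous maps $k\colon Z\to Y$, $h\colon A\to X$ with $f\circ h=k|A$, there is a continuous $g\colon Z\to X$ extending $h$ with $f\circ g=k$. A family $\mathcal S$ of closed subsets of $X$ is a closed subbase if every closed set is an intersection of finite unions of members of $\mathcal S$. A family is linked if any two members intersect; $\mathcal S$ is binary if every linked subfamily has nonempty intersection. $\mathcal S$ is normal if for every disjoint $S_0,S_1\in\mathcal S$ there exist $T_0,T_1\in\mathcal S$ with $S_0\cap T_1=\varnothing=T_0\cap S_1$ and $T_0\cup T_1=X$. For $B\subset X$, $I_{\mathcal S}(B)=\bigcap\{S\in\mathcal S:B\subset S\}$; $B$ is $\mathcal S$-convex if $I_{\mathcal S}(\{x,y\})\subset B$ for all $x,y\in B$. A map $f$ is $\mathcal S$-convex if its fibers are $\mathcal S$-convex, and $\mathcal S$-open if $f(X\setminus S)$ is open for every $S\in\mathcal S$. *)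

(* Defs.v *)
From HB Require Import structures.
From mathcomp Require Import all_boot all_order all_algebra.
From mathcomp Require Import all_classical all_reals all_analysis.
From mathcomp Require Import Rstruct Rstruct_topology.
Set Implicit Arguments. Unset Strict Implicit. Unset Printing Implicit Defensive.
Import Order.TTheory GRing.Theory Num.Theory.
Local Open Scope classical_set_scope.

(* Tychonoff = completely regular (library notion, with the reals as scalars) + Hausdorff *)
Definition tychonoff_space (T : topologicalType) : Prop :=
  completely_regular_space T /\ hausdorff_space T.

(* A map A -> X is represented
   by a function h : Z -> X continuous on A (only its values on A matter). *)
Definition absolute_extensor_for (X Z : topologicalType) : Prop :=
  forall (A : set Z) (h : Z -> X), closed A -> {within A, continuous h} ->
  exists g : Z -> X, continuous g /\ {in A, g =1 h}.

Definition soft_wrt (cA : topologicalType -> Prop)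
    (X Y : topologicalType) (f : X -> Y) : Prop :=
  forall (Z : topologicalType), cA Z ->
  forall (A : set Z) (k : Z -> Y) (h : Z -> X),
    closed A -> continuous k -> {within A, continuous h} ->
    (forall z, A z -> f (h z) = k z) ->
    exists g : Z -> X, continuous g /\ {in A, g =1 h} /\ (forall z, f (g z) = k z).

Definition finite_union_of {X : Type} (S : set (set X)) (B : set X) : Prop :=
  exists F : set (set X), finite_set F /\ F `<=` S /\ B = \bigcup_(U in F) U.

Definition closed_subbase {X : topologicalType} (S : set (set X)) : Prop :=
  (forall U, S U -> closed U) /\
  forall C : set X, closed C ->
    exists G : set (set X), G `<=` finite_union_of S /\ C = \bigcap_(B in G) B.

Definition linked {X : Type} (L : set (set X)) : Prop :=
  forall U V, L U -> L V -> U `&` V !=set0.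

Definition binary {X : Type} (S : set (set X)) : Prop :=
  forall L, L `<=` S -> linked L -> \bigcap_(U in L) U !=set0.

Definition normal_family {X : Type} (S : set (set X)) : Prop :=
  forall S0 S1, S S0 -> S S1 -> S0 `&` S1 = set0 ->
  exists T0 T1, S T0 /\ S T1 /\ S0 `&` T1 = set0 /\ T0 `&` S1 = set0 /\
    T0 `|` T1 = setT.

Definition I_S {X : Type} (S : set (set X)) (B : set X) : set X :=
  \bigcap_(U in [set U | S U /\ B `<=` U]) U.

Definition S_convex {X : Type} (S : set (set X)) (B : set X) : Prop :=
  forall x y, B x -> B y -> I_S S [set x; y] `<=` B.

Definition S_convex_map {X Y : Type} (S : set (set X)) (f : X -> Y) : Prop :=
  forall y : Y, S_convex S (f @^-1` [set y]).

Definition S_open_map {X Y : topologicalType} (S : set (set X)) (f : X -> Y) : Prop :=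
  forall U, S U -> open (f @` (~` U)).

(* Main.v *)
Require Import Defs.
From mathcomp Require Import all_boot all_classical all_reals all_analysis.
Local Open Scope classical_set_scope.

Lemma sub_point (X : topologicalType) (S : set (set X)) :
  closed_subbase S -> hausdorff_space X ->
  forall p q : X, p <> q -> exists U, S U /\ U p /\ ~ U q.
Proof.
move=> [_ Hc] hX p q pq.
have [G [GS E]] := Hc [set p] (@accessible_closed_set1 X (@hausdorff_accessible X hX) p).
have : ~ (\bigcap_(B in G) B) q by rewrite -E => /= ?; apply: pq.
move=> /existsNP [B /not_implyP [GB nBq]].
have [F [_ [FS BE]]] := GS B GB.
have : B p.
  have : [set p] p by [].
  by rewrite E; apply.
rewrite BE => -[U FU Up]; exists U; split; first exact: FS.
split => // Uq; apply: nBq; rewrite BE; by exists U.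
Qed.

Lemma sep_pt (X : topologicalType) (S : set (set X)) :
  closed_subbase S -> hausdorff_space X -> binary S -> normal_family S ->
  forall U p, S U -> ~ U p -> exists T, S T /\ T p /\ T `&` U = set0.
Proof.
move=> Ssub hX Sbin Snorm U p SU nUp.
have [U0|Un0] := pselect (U = set0).
  have [T0 [T1 [ST0 [ST1 [_ [_ E]]]]]] := Snorm U U SU SU ltac:(by rewrite U0 setI0).
  have : (T0 `|` T1) p by rewrite E.
  case=> [T0p|T1p]; [exists T0|exists T1]; by rewrite U0 setI0.
apply: contrapT => H.
have LS : [set V | S V /\ (V p \/ V = U)] `<=` S by move=> V [].
have Llk : linked [set V | S V /\ (V p \/ V = U)].
  move=> V W [SV HV] [SW HW].
  have key : forall V, S V -> V p -> V `&` U !=set0.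
    move=> V' SV' V'p; apply/set0P/eqP => E; apply: H; by exists V'.
  case: HV => [Vp|->]; case: HW => [Wp|->].
  - by exists p.
  - exact: key.
  - by rewrite setIC; apply: key.
  - by rewrite setIid; apply/set0P/eqP.
have [q Lq] := Sbin _ LS Llk.
have Uq : U q by apply: Lq; split => //; right.
have pq : p <> q by move=> E; apply: nUp; rewrite E.
have [V [SV [Vp nVq]]] := @sub_point X S Ssub hX p q pq.
by apply: nVq; apply: Lq; split => //; left.
Qed.

Lemma pair_trick (X : Type) (S : set (set X)) (C : set X) (x : X)
  (R : set X -> Prop) (q : set X -> set X) (s : seq (set X)) :
  binary S -> S_convex S C -> C !=set0 ->
  (forall U, U \in s -> R U -> S (q U) /\ q U x /\ q U `&` C !=set0) ->
  exists c, C c /\ forall U, U \in s -> R U -> q U c.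
Proof.
move=> Sbin Sconv [c0 Cc0]; elim: s => [|U s IH] H.
  by exists c0; split => // U; rewrite in_nil.
have [|d [Cd Hd]] := IH.
  by move=> V Vs RV; apply: H => //; rewrite in_cons Vs orbT.
have [RU|nRU] := pselect (R U); last first.
  exists d; split => // V; rewrite in_cons => /orP[/eqP->|Vs] RV //.
  by apply: Hd.
have [SqU [qUx [c' [qUc' Cc']]]] := H U (mem_head _ _) RU.
pose M := [set V | (exists W, W \in U :: s /\ R W /\ V = q W) \/ (S V /\ V d /\ V c')].
have MS : M `<=` S.
  move=> V [[W [Ws [RW ->]]]|[]//].
  by have [] := H W Ws RW.
have hx : forall W, W \in U :: s -> R W -> q W x by move=> W Ws RW; have [_ []] := H W Ws RW.
have hdc : forall W, W \in U :: s -> R W -> q W c' \/ q W d.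
  move=> W; rewrite in_cons => /orP[/eqP->|Ws] RW; first by left.
  by right; apply: Hd.
have Mlk : linked M.
  move=> V W [[V' [V's [RV' ->]]]|[SV [Vd Vc]]] [[W' [W's [RW' ->]]]|[SW [Wd Wc]]].
  - by exists x; split; apply: hx.
  - by case: (hdc V' V's RV') => ?; [exists c'|exists d].
  - by case: (hdc W' W's RW') => ?; [exists c'|exists d].
  - by exists d.
have [r Mr] := Sbin M MS Mlk.
exists r; split.
  apply: (Sconv d c' Cd Cc') => V [SV sub]; apply: Mr; right; split => //.
  by split; apply: sub; [left|right].
by move=> V Vs RV; apply: Mr; left; exists V.
Qed.

Definition Lfam (X Y : Type) (S : set (set X)) (f : X -> Y) (x : X) (y : Y) :
  set (set X) :=
  [set U | S U /\ ((U x /\ U `&` (f @^-1` [set y]) !=set0) \/ (f @^-1` [set y]) `<=` U)].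
Arguments Lfam {X Y} S f x y.

Lemma L_split (X Y : Type) (S : set (set X)) (f : X -> Y) (x : X) (y : Y) (A B : set X) :
  S A -> S B -> A `|` B = setT -> Lfam S f x y A \/ Lfam S f x y B.
Proof.
move=> SA SB E.
have cov : forall z, A z \/ B z by move=> z; have : (A `|` B) z by rewrite E.
have gen : forall A B, S A -> S B -> (forall z, A z \/ B z) -> A x ->
    Lfam S f x y A \/ Lfam S f x y B.
  move=> A' B' SA' SB' cov' A'x.
  have [ne|e] := pselect (A' `&` (f @^-1` [set y]) !=set0).
    by left; split => //; left.
  right; split => //; right => z fz; case: (cov' z) => // A'z.
  by exfalso; apply: e; exists z.
case: (cov x) => [Ax|Bx]; first exact: gen.
have := gen B A SB SA (fun z => proj1 (or_comm (A z) (B z)) (cov z)) Bx; tauto.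
Qed.

Lemma L_linked (X Y : Type) (S : set (set X)) (f : X -> Y) (x : X) (y : Y) :
  (exists p, f p = y) -> linked (Lfam S f x y).
Proof.
move=> [p fp] U V [_ [[Ux HU]|HU]] [_ [[Vx HV]|HV]].
- by exists x.
- by case: HU => c [Uc fc]; exists c; split => //; apply: HV.
- by case: HV => c [Vc fc]; exists c; split => //; apply: HU.
- by exists p; split; [apply: HU|apply: HV].
Qed.

Lemma L_uniq (X : topologicalType) (Y : Type) (S : set (set X)) (f : X -> Y) :
  closed_subbase S -> hausdorff_space X -> binary S -> normal_family S ->
  forall x y p1 p2, (\bigcap_(U in Lfam S f x y) U) p1 ->
  (\bigcap_(U in Lfam S f x y) U) p2 -> p1 = p2.
Proof.
move=> Ssub hX Sbin Snorm x y p1 p2 H1 H2; apply: contrapT => ne.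
have [V [SV [Vp1 nVp2]]] := @sub_point X S Ssub hX p1 p2 ne.
have [T [ST [Tp2 TV]]] := @sep_pt X S Ssub hX Sbin Snorm V p2 SV nVp2.
have [V0 [V1 [SV0 [SV1 [E1 [E2 E3]]]]]] := Snorm V T SV ST ltac:(by rewrite setIC).
case: (@L_split X Y S f x y V0 V1 SV0 SV1 E3) => LV.
  have : (V0 `&` T) p2 by split => //; apply: H2.
  by rewrite E2.
have : (V `&` V1) p1 by split => //; apply: H1.
by rewrite E1.
Qed.

Lemma L_exists (X Y : topologicalType) (S : set (set X)) (f : X -> Y) :
  closed_subbase S -> hausdorff_space X -> binary S -> normal_family S ->
  continuous f -> hausdorff_space Y -> S_convex_map S f ->
  forall x y, (exists p, f p = y) ->
  exists p, f p = y /\ (\bigcap_(U in Lfam S f x y) U) p.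
Proof.
move=> Ssub hX Sbin Snorm fcont hY fconv x y fsy.
have LS : Lfam S f x y `<=` S by move=> U [].
have [p Lp] := Sbin _ LS (@L_linked X Y S f x y fsy).
exists p; split => //; apply: contrapT => nfp.
set C := f @^-1` [set y].
have Cne : C !=set0 by case: fsy => z fz; exists z.
have Ccl : closed C.
  apply: preimage_closed; first by move=> z _; apply: fcont.
  exact: (@accessible_closed_set1 Y (@hausdorff_accessible Y hY) y).
have [G [GS CE]] := Ssub.2 C Ccl.
have : ~ (\bigcap_(B in G) B) p by rewrite -CE.
move=> /existsNP [B /not_implyP [GB nBp]].
have [F [finF [FS BE]]] := GS B GB.
have [s Fs] := (iffLR (finite_seqP F)) finF.
pose R := fun U => S U /\ U `&` C !=set0 /\ ~ U p.
pose Good := fun U Q => S Q /\ Q x /\ Q `&` C !=set0 /\ Q `&` U = set0.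
have exQ : forall U, exists Q, R U -> Good U Q.
  move=> U; have [RU|nRU] := pselect (R U); last by exists set0.
  case: RU => SU [[c0 [Uc0 Cc0]] nUp].
  have [T [ST [Tp TU]]] := @sep_pt X S Ssub hX Sbin Snorm U p SU nUp.
  have [P0 [P1 [SP0 [SP1 [E1 [E2 E3]]]]]] := Snorm T U ST SU TU.
  have cov : forall z, P0 z \/ P1 z by move=> z; have : (P0 `|` P1) z by rewrite E3.
  have nP1p : ~ P1 p.
    move=> P1p; suff : (T `&` P1) p by rewrite E1.
    by split.
  have nLP1 : ~ Lfam S f x y P1 by move=> LP1; apply: nP1p; apply: Lp.
  have UP1 : U `<=` P1.
    move=> z Uz; case: (cov z) => // P0z.
    by have : (P0 `&` U) z by []; rewrite E2.
  exists P0 => _; split => //; split.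
    case: (cov x) => // P1x; exfalso; apply: nLP1; split => //; left.
    by split => //; exists c0; split => //; apply: UP1.
  split; last by [].
  have : ~ (C `<=` P1) by move=> CP1; apply: nLP1; split => //; right.
  move=> /existsNP [c /not_implyP [Cc nP1c]].
  by exists c; split => //; case: (cov c).
have [q Hq] := choice exQ.
have [c [Cc Hc]] := @pair_trick X S C x R q s Sbin (fconv y) Cne
  ltac:(by move=> U _ RU; have [? [? [? _]]] := Hq U RU).
have Bc : B c by move: Cc; rewrite CE => /(_ B GB).
move: Bc; rewrite BE => -[U FU Uc].
have Us : U \in s by move: FU; rewrite Fs.
have RU : R U.
  split; first exact: FS.
  split; first by exists c.
  by move=> Up; apply: nBp; rewrite BE; exists U.
have [_ [_ [_ E]]] := Hq U RU.
suff : (q U `&` U) c by rewrite E.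
by split => //; apply: Hc.
Qed.

Lemma ultra_finite_union (T : Type) (F : set_system T) (s : seq (set T)) :
  UltraFilter F -> forall B, F B -> B `<=` \bigcup_(U in [set` s]) U ->
  exists U, U \in s /\ F U.
Proof.
move=> FU; elim: s => [|U s IH] B FB Bsub.
  have [z Bz] := filter_ex FB.
  by have [V] := Bsub z Bz; rewrite /= in_nil.
have [FUU|FnU] := in_ultra_setVsetC U FU.
  by exists U; split => //; apply: mem_head.
have [|V [Vs FV]] := IH (B `&` ~` U) (filterI FB FnU).
  move=> z [Bz nUz]; have [V] := Bsub z Bz.
  by rewrite /= in_cons => /orP[/eqP->//|Vs] Vz; exists V.
by exists V; split => //; rewrite in_cons Vs orbT.
Qed.

Lemma X_compact (X : topologicalType) (S : set (set X)) :
  closed_subbase S -> binary S -> compact [set: X].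
Proof.
move=> Ssub Sbin; rewrite compact_ultra => F FU _.
have LS : [set U | S U /\ F U] `<=` S by move=> U [].
have Llk : linked [set U | S U /\ F U].
  move=> U V [_ FU'] [_ FV]; exact: filter_ex (filterI FU' FV).
have [p Lp] := Sbin _ LS Llk.
exists p; split => //.
move=> W; rewrite nbhsE; move=> [Op0 [oO Opp] OW].
apply: contrapT => nFW.
have [G [GS CE]] := Ssub.2 (~` Op0) ltac:(by rewrite closedC).
have : ~ (\bigcap_(B in G) B) p by rewrite -CE.
move=> /existsNP [B /not_implyP [GB nBp]].
have [F0 [finF [FS BE]]] := GS B GB.
have [s Fs] := (iffLR (finite_seqP F0)) finF.
have FnW : F (~` W) by case: (in_ultra_setVsetC W FU).
have Bsub : ~` W `<=` \bigcup_(U in [set` s]) U.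
  move=> z nWz; have : B z.
    have : (~` Op0) z by move=> Oz; apply: nWz; apply: OW.
    by rewrite CE => /(_ B GB).
  by rewrite BE -Fs.
have [U [Us FU0]] := @ultra_finite_union X F s FU (~` W) FnW Bsub.
apply: nBp; rewrite BE; exists U; first by rewrite Fs.
by apply: Lp; split => //; apply: FS; rewrite Fs.
Qed.

Lemma near_all_seq (Z : Type) (F : set_system Z) (FF : Filter F)
  (T : eqType) (P : T -> Z -> Prop) (s : seq T) :
  (forall U, U \in s -> F (P U)) -> F (fun z => forall U, U \in s -> P U z).
Proof.
elim: s => [|U s IH] H.
  by apply: filterS filterT => z _ U; rewrite in_nil.
have H1 : F (P U) by apply: H; apply: mem_head.
have H2 := IH (fun V Vs => H V ltac:(by rewrite in_cons Vs orbT)).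
apply: filterS (filterI H1 H2) => z [PU Ps] V; rewrite in_cons => /orP[/eqP->//|].
exact: Ps.
Qed.

Lemma r_cont (X Y Z : topologicalType) (S : set (set X)) (f : X -> Y)
  (r : X -> Y -> X) (g0 : Z -> X) (k : Z -> Y) :
  closed_subbase S -> hausdorff_space X -> binary S -> normal_family S ->
  hausdorff_space Y -> continuous f -> S_open_map S f ->
  (forall x y, (\bigcap_(U in Lfam S f x y) U) (r x y)) ->
  continuous g0 -> continuous k -> continuous (fun z => r (g0 z) (k z)).
Proof.
move=> Ssub hX Sbin Snorm hY fcont fopen Hr g0c kc z0.
set x0 := g0 z0; set y0 := k z0; set p0 := r x0 y0.
have key : forall U, S U -> ~ U p0 -> \forall z \near z0, ~ U (r (g0 z) (k z)).
  move=> U SU nUp.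
  have [T [ST [Tp TU]]] := @sep_pt X S Ssub hX Sbin Snorm U p0 SU nUp.
  have [T0 [T1 [ST0 [ST1 [E1 [E2 E3]]]]]] := Snorm T U ST SU TU.
  have cov : forall z, T0 z \/ T1 z by move=> z; have : (T0 `|` T1) z by rewrite E3.
  have nT1p : ~ T1 p0.
    move=> T1p; suff : (T `&` T1) p0 by rewrite E1.
    by split.
  have nLT1 : ~ Lfam S f x0 y0 T1 by move=> LT1; apply: nT1p; apply: Hr.
  suff : \forall z \near z0, Lfam S f (g0 z) (k z) T0.
    apply: filterS => z LT0 Uz.
    suff : (T0 `&` U) (r (g0 z) (k z)) by rewrite E2.
    by split => //; apply: Hr.
  have T1cl : closed T1 by apply: Ssub.1.
  have : ~ (f @^-1` [set y0] `<=` T1) by move=> CT1; apply: nLT1; split => //; right.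
  move=> /existsNP [c /not_implyP [fc nT1c]].
  have [T1x|nT1x] := pselect (T1 x0).
    have nimg : ~ (f @` T1) y0.
      move=> [w T1w fw]; apply: nLT1; split => //; left; split => //.
      by exists w.
    have imgcl : closed (f @` T1).
      apply: (compact_closed hY); apply: continuous_compact.
        exact: continuous_subspaceT.
      apply: (subclosed_compact T1cl (@X_compact X S Ssub Sbin)) => //.
    have Vn : nbhs y0 (~` (f @` T1)).
      by apply: open_nbhs_nbhs; split => //; rewrite openC.
    have H : \forall z \near z0, ~ (f @` T1) (k z) := kc z0 _ Vn.
    apply: filterS H => z nk; split => //; right => w /= fw.
    by case: (cov w) => // T1w; exfalso; apply: nk; exists w.
  have Vn1 : nbhs x0 (~` T1).
    by apply: open_nbhs_nbhs; split => //; rewrite openC.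
  have Vn2 : nbhs y0 (f @` (~` T1)).
    apply: open_nbhs_nbhs; split; first exact: fopen.
    by exists c.
  have H1 : \forall z \near z0, ~ T1 (g0 z) := g0c z0 _ Vn1.
  have H2 : \forall z \near z0, (f @` (~` T1)) (k z) := kc z0 _ Vn2.
  apply: filterS (filterI H1 H2) => z [/= nT1 [w nT1w fw]].
  split => //; left; split; first by case: (cov (g0 z)).
  by exists w; split => //; case: (cov w).
move=> W /=; rewrite nbhsE => -[Op0 [oO Opp] OW].
have [G [GS CE]] := Ssub.2 (~` Op0) ltac:(by rewrite closedC).
have : ~ (~` Op0) p0 by apply.
rewrite CE.
move=> /existsNP [B /not_implyP [GB nBp]].
have [F0 [finF [FS BE]]] := GS B GB.
have [s Fs] := (iffLR (finite_seqP F0)) finF.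
have : \forall z \near z0, forall U, U \in s -> ~ U (r (g0 z) (k z)).
  apply: near_all_seq => U Us; apply: key.
    by apply: FS; rewrite Fs.
  by move=> Up; apply: nBp; rewrite BE; exists U => //; rewrite Fs.
apply: filterS => z Hz; apply: OW; apply: contrapT => nO.
have : B (r (g0 z) (k z)).
  have : (~` Op0) (r (g0 z) (k z)) by [].
  by rewrite CE => /(_ B GB).
by rewrite BE => -[U FU]; apply: Hz; move: FU; rewrite Fs.
Qed.

Theorem corollary1p4
  (cA : topologicalType -> Prop)
  (cA_tych : forall Z, cA Z -> tychonoff_space Z)
  (X Y : topologicalType) (tychX : tychonoff_space X) (tychY : tychonoff_space Y)
  (AE : forall Z, cA Z -> absolute_extensor_for X Z)
  (S : set (set X)) (Ssub : closed_subbase S) (Sbin : binary S)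
  (Snorm : normal_family S)
  (f : X -> Y) (fcont : continuous f) (fsurj : forall y, exists x, f x = y)
  (fconv : S_convex_map S f) (fopen : S_open_map S f) :
  soft_wrt cA f.
Proof.
move=> Z cAZ A k h Acl kc hc fhk.
have hX := tychX.2; have hY := tychY.2.
have [g0 [g0c g0h]] := AE Z cAZ A h Acl hc.
have exr : forall x, exists rx : Y -> X,
    forall y, f (rx y) = y /\ (\bigcap_(U in Lfam S f x y) U) (rx y).
  move=> x.
  have [rx Hrx] := choice (fun y => @L_exists X Y S f Ssub hX Sbin Snorm fcont hY fconv x y (fsurj y)).
  by exists rx.
have [r Hr] := choice exr.
exists (fun z => r (g0 z) (k z)); split.
  apply: (@r_cont X Y Z S f r g0 k Ssub hX Sbin Snorm hY fcont fopen) => //.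
  by move=> x y; have [] := Hr x y.
split; last by move=> z; have [] := Hr (g0 z) (k z).
move=> z Az; rewrite g0h //.
have Az' : A z by move: Az; rewrite inE.
apply: (@L_uniq X Y S f Ssub hX Sbin Snorm (h z) (k z)).
  by have [] := Hr (h z) (k z).
move=> U [_ [[Uh _]|CU]] //; apply: CU.
by rewrite /= fhk.
Qed.
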